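(* Let $S$ be a numerical semigroup with $\rho=qm-c$, and let $G=G(S)$ with weight map $\mathrm{wt}(\{x,y\})=x+y$ and set of weak edges $E_0(G)$. Then $\rho\ge|\mathrm{wt}(E_0(G))|$.
   Context: A numerical semigroup is a subset $S\subseteq\mathbb N$ containing $0$, closed under addition, with finite complement; $S^*=S\setminus\{0\}$, $m=\min S^*$, $c=\max(\mathbb Z\setminus S)+1$, $q=\lceil c/m\rceil$, $\rho=qm-c$. $X=\{s\in S^*: s-m\notin S\}$. For $x\in S$, $\delta(x)$ is the unique integer with $x+\delta(x)m\in[c,c+m-1]$. The graph $G(S)$ has edge set all subsets $\{x,y\}\subseteq X$ ($x=y$ allowed) with $x+y\in X$. An edge $\{x,y\}$ is weak if $\delta(x)+\delta(y)=q-1$; $E_0(G)$ is the set of weak edges. *)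

(* Defs.v *)
From mathcomp Require Import all_boot all_order all_algebra.
Set Implicit Arguments. Unset Strict Implicit. Unset Printing Implicit Defensive.
Import Order.TTheory GRing.Theory Num.Theory.

Definition numerical_semigroup (S : pred nat) : Prop :=
  [/\ 0 \in S,
      (forall a b, a \in S -> b \in S -> a + b \in S)
    & exists N, forall n, N <= n -> n \in S].

Definition is_multiplicity (S : pred nat) (m : nat) : Prop :=
  [/\ 0 < m, m \in S & forall s, 0 < s -> s \in S -> m <= s].

(* c = max (Z \ S) + 1 (the conductor): every integer >= c lies in S and
   c - 1 does not (c = 0 means Z \ S consists of the negative integers). *)
Definition is_conductor (S : pred nat) (c : nat) : Prop :=
  (forall n, c <= n -> n \in S) /\ (c = 0 \/ c.-1 \notin S).

(* q = ceil(c/m), rho = q m - c *)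
Definition qq (m c : nat) : nat := (c + m.-1) %/ m.
Definition rho (m c : nat) : nat := qq m c * m - c.

(* X = { s in S^* : s - m notin S }  (s - m is an integer; negative ones are
   never in S) *)
Definition inX (S : pred nat) (m : nat) (s : nat) : bool :=
  [&& 0 < s, s \in S & (s < m) || (s - m \notin S)].

Definition is_delta (m c x : nat) (d : int) : Prop :=
  (c%:Z <= x%:Z + d * m%:Z)%R /\ (x%:Z + d * m%:Z <= c%:Z + m%:Z - 1)%R.

(* {x,y} is an edge of G(S): x, y in X (x = y allowed) and x + y in X. *)
Definition is_edge (S : pred nat) (m x y : nat) : Prop :=
  [/\ inX S m x, inX S m y & inX S m (x + y)].

Definition is_weak_edge (S : pred nat) (m c x y : nat) : Prop :=
  is_edge S m x y /\
  exists dx dy : int, [/\ is_delta m c x dx, is_delta m c y dy &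
                        (dx + dy = (qq m c)%:Z - 1)%R].

Definition weak_weights (S : pred nat) (m c : nat) (w : nat) : Prop :=
  exists x y, is_weak_edge S m c x y /\ w = x + y.

(* Main.v *)
Require Import Defs.
From mathcomp Require Import all_boot all_order all_algebra.
From mathcomp Require Import zify.
Import GRing.Theory Num.Theory.

Lemma w_bounds (Sg : pred nat) (m c w : nat) :
  numerical_semigroup Sg -> is_multiplicity Sg m -> is_conductor Sg c ->
  weak_weights Sg m c w -> c + m - rho m c <= w < c + m.
Proof.
move=> _ [m0 mS _] [cS _] [x [y [[[_ _ hw] [dx [dy [[hx1 _] [hy1 _] e]]]] ->]]].
have qm : c <= qq m c * m.
  have := divn_eq (c + m.-1) m; have := ltn_pmod (c + m.-1) m0.
  rewrite /qq; lia.
have k : (dx * m%:Z + dy * m%:Z = ((qq m c)%:Z - 1) * m%:Z)%R.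
  by rewrite -mulrDl e.
have up : x + y < c + m.
  move: hw; rewrite /inX => /and3P [_ _ /orP [h|h]]; first lia.
  case: (leqP m (x + y)) => h2; last lia.
  case: (leqP c (x + y - m)) => h3; last lia.
  by rewrite cS in h.
rewrite up andbT /rho.
have : (2 * c%:Z <= (x + y)%:Z + ((qq m c)%:Z - 1) * m%:Z)%R by lia.
move: qm; set q := qq m c; lia.
Qed.

Theorem corollary3p21 (Sg : pred nat) (m c : nat) :
  numerical_semigroup Sg -> is_multiplicity Sg m -> is_conductor Sg c ->
  exists f : nat -> nat,
    (forall w, weak_weights Sg m c w -> f w < rho m c) /\
    (forall w1 w2, weak_weights Sg m c w1 -> weak_weights Sg m c w2 ->
       f w1 = f w2 -> w1 = w2).
Proof.
move=> H1 H2 H3; exists (fun w => w - (c + m - rho m c)); split.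
  by move=> w /(w_bounds _ _ _ _ H1 H2 H3); lia.
move=> w1 w2 /(w_bounds _ _ _ _ H1 H2 H3) h1 /(w_bounds _ _ _ _ H1 H2 H3) h2; lia.
Qed.
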